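(* Let $1\le i\le r$, $(\ell^+,\mathbf s^+)\in\mathbf F_+$ and $(\ell,\mathbf s)\in\mathbf F$. Then $\mathrm{pr}\big(\mathbf x^+_{i,r}(\ell^+,\mathbf s^+)\,\mathbf x^-_{i,r}(\ell,\mathbf s)\big)$ is a linear combination of elements $\mathbf x^-_{i,r}(\ell-\ell^+,\mathbf s')$ with $(\ell-\ell^+,\mathbf s')\in\mathbf F$ and $|\mathbf s'|=|\mathbf s|+|\mathbf s^+|$ (in particular it is $0$ if $\ell^+>\ell$).
   Context: $\mathfrak g=\mathfrak{sl}_{r+1}(\mathbb C)$, $\mathfrak h$ diagonal, $x^+_{i,j}=E_{i,j+1}$, $x^-_{i,j}=E_{j+1,i}$, $\mathfrak n^\pm=\bigoplus\mathbb Cx^\pm_{i,j}$, $\mathfrak b^+=\mathfrak h\oplus\mathfrak n^+$, $\mathfrak a[t]=\mathfrak a\otimes\mathbb C[t]$. $\mathrm{pr}:U(\mathfrak g[t])\to U(\mathfrak n^-[t])$ is the projection along $U(\mathfrak g[t])\mathfrak b^+[t]$ in $U(\mathfrak g[t])=U(\mathfrak n^-[t])\oplus U(\mathfrak g[t])\mathfrak b^+[t]$. $\mathbf F$: pairs $(\ell,\mathbf s)$, $\ell\in\mathbb N$, $\mathbf s=(\mathbf s(1)\le\dots\le\mathbf s(\ell))\in\mathbb N^\ell$, $|\mathbf s|=\sum_p\mathbf s(p)$; $\mathbf F_+\subset\mathbf F$: $(0,\emptyset)$ and pairs with all $\mathbf s(p)>0$. $\mathbf x^\pm_{i,j}(\ell,\mathbf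 s)=\prod_{p=1}^\ell(x^\pm_{i,j}\otimes t^{\mathbf s(p)})$ (equal to $1$ if $\ell=0$). *)

(* Defs.v *)
From HB Require Import structures.
From mathcomp Require Import all_boot all_order all_algebra.
From mathcomp Require Import reals.
From mathcomp Require Import complex.
From mathcomp.multinomials Require Import monalg.

Set Implicit Arguments.
Unset Strict Implicit.
Unset Printing Implicit Defensive.

Import Order.TTheory GRing.Theory Num.Theory.
Local Open Scope ring_scope.

Definition word (G : choiceType) := seq G.
HB.instance Definition _ (G : choiceType) := Choice.on (word G).

Lemma word_unitm (G : choiceType) (x y : word G) :
  x ++ y = [::] -> x = [::] /\ y = [::].
Proof. by case: x => //; case: y. Qed.

HB.instance Definition _ (G : choiceType) :=
  Choice_isMonomialDef.Build (word G) (@catA G) (@cat0s G) (@cats0 G)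
    (@word_unitm G).

Section Current.
Variable R : realType.
Local Notation C := (R[i])%C.
Variable r : nat.

Definition slmx := {M : 'M[C]_(r.+1) | \tr M == 0}.

(* generators of g[t] (as a set): x (x) t^k, x in sl_{r+1}, k in N *)
Definition gen_t := (slmx * nat)%type.

(* Free associative C-algebra on the set g x N *)
Definition FA := {malg C[word gen_t]}.

Definition ge (M : slmx) (k : nat) : FA := << ([:: (M, k)] : word gen_t) >>.

(* Two-sided ideal J of the defining relations of U(g[t]):
   linearity in x and [x (x) t^k, y (x) t^l] = [x,y] (x) t^(k+l).
   U(g[t]) = FA / J. *)
Inductive relJ : FA -> Prop :=
| J_lin (a : C) (M N P : slmx) (k : nat) :
    val P = a *: val M + val N -> relJ (ge P k - (a *: ge M k + ge N k))
| J_br (M N P : slmx) (k l : nat) :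
    val P = val M *m val N - val N *m val M ->
    relJ (ge M k * ge N l - ge N l * ge M k - ge P (k + l))
| J_add X Y : relJ X -> relJ Y -> relJ (X + Y)
| J_scale (c : C) X : relJ X -> relJ (c *: X)
| J_mull A X : relJ X -> relJ (A * X)
| J_mulr A X : relJ X -> relJ (X * A).

Definition in_bplus (M : slmx) : bool :=
  [forall i : 'I_r.+1, forall j : 'I_r.+1, (j < i)%N ==> (val M i j == 0)].
Definition in_nminus (M : slmx) : bool :=
  [forall i : 'I_r.+1, forall j : 'I_r.+1, (i <= j)%N ==> (val M i j == 0)].

Inductive leftB : FA -> Prop :=
| LB0 : leftB 0
| LBgen A (M : slmx) (k : nat) X :
    in_bplus M -> leftB X -> leftB (A * ge M k + X).

(* preimage in FA of the left ideal U(g[t]) b^+[t] of U(g[t]) *)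
Definition in_UgBplus (X : FA) : Prop :=
  exists Y Z, relJ Y /\ leftB Z /\ X = Y + Z.

Inductive nminus_span : FA -> Prop :=
| NS0 : nminus_span 0
| NSw (c : C) (w : seq gen_t) X :
    all (fun g => in_nminus g.1) w -> nminus_span X ->
    nminus_span (c *: \prod_(g <- w) ge g.1 g.2 + X).

(* preimage in FA of the subalgebra U(n^-[t]) of U(g[t]) *)
Definition in_Unminus (X : FA) : Prop :=
  exists Y Z, relJ Y /\ nminus_span Z /\ X = Y + Z.

(* [is_pr X Z] : pr(X) = Z in U(g[t]), where
   pr : U(g[t]) = U(n^-[t]) (+) U(g[t]) b^+[t] -> U(n^-[t]) is the projection;
   i.e. Z lies in U(n^-[t]) and X - Z lies in U(g[t]) b^+[t]. *)
Definition is_pr (X Z : FA) : Prop := in_Unminus Z /\ in_UgBplus (X - Z).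

Lemma tr_delta_neq (a b : 'I_r.+1) : a != b -> \tr (delta_mx a b : 'M[C]_r.+1) == 0.
Proof.
move=> ab; apply/eqP; rewrite /mxtrace.
apply: big1 => k _; rewrite mxE.
case: (k =P a) => [->|] //=; by rewrite (negbTE ab).
Qed.

(* For i : 'I_r (0-based, i.e. paper's index i+1 in 1..r) *)
Definition idx (i : 'I_r) : 'I_r.+1 := widen_ord (leqnSn r) i.

Lemma idx_neq_max (i : 'I_r) : idx i != ord_max.
Proof. by rewrite -val_eqE /= neq_ltn ltn_ord. Qed.

Lemma max_neq_idx (i : 'I_r) : ord_max != idx i.
Proof. by rewrite eq_sym idx_neq_max. Qed.

Definition xplus (i : 'I_r) : slmx :=
  exist _ (delta_mx (idx i) ord_max) (tr_delta_neq (idx_neq_max i)).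
Definition xminus (i : 'I_r) : slmx :=
  exist _ (delta_mx ord_max (idx i)) (tr_delta_neq (max_neq_idx i)).

(* F : pairs (l, s) with s nondecreasing of length l; encoded by s : seq nat *)
Definition inF (s : seq nat) : bool := sorted leq s.
Definition inFplus (s : seq nat) : bool := sorted leq s && all (fun a => 0 < a)%N s.

Definition bx (M : slmx) (s : seq nat) : FA := \prod_(a <- s) ge M a.

End Current.

(* Main.v *)
Require Import Defs.
From HB Require Import structures.
From mathcomp Require Import all_boot all_order all_algebra.
From mathcomp Require Import reals complex.
From mathcomp.multinomials Require Import monalg.
From mathcomp Require Import finmap zify.
Import GRing.Theory.
Local Open Scope ring_scope.


Lemma genL0 (V : pzRingType) (A : V) : A * 1 - 1 * A = 0.
Proof. by rewrite mulr1 mul1r subrr. Qed.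

Lemma genS (V : zmodType) (a b c d : V) : (a + b) - (c + d) = (a - c) + (b - d).
Proof. by rewrite opprD addrACA. Qed.

Lemma genT (V : zmodType) (a b c : V) : (a - b) + (b - c) = a - c.
Proof. by rewrite addrA subrK. Qed.

Lemma genL1 (V : pzRingType) (A B D T : V) :
  A * (B * T) - (B * (A * T) + D * T) = (A * B - B * A - D) * T.
Proof. by rewrite !mulrBl !mulrA opprD addrA. Qed.

Lemma genL2 (V : pzRingType) (A B T : V) :
  A * (B * T) - B * T * A = (A * B - B * A) * T + B * (A * T - T * A).
Proof. by rewrite mulrBl mulrBr !mulrA addrA subrK. Qed.

Lemma genL3 (V : pzRingType) (X S T1 T2 : V) :
  X * S - T1 * (X * T2) = X * (S - T1 * T2) + (X * T1 - T1 * X) * T2.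
Proof. by rewrite mulrBr mulrBl !mulrA addrA subrK. Qed.

Lemma genL4 (V : zmodType) (D P S Z : V) : (D - P) + (P - (S + Z)) + Z = D - S.
Proof. by rewrite addrA subrK opprD addrA subrK. Qed.

Section Proof.
Variable R : realType.
Variable r : nat.
Variable i : 'I_r.

Local Notation C := (complex R).
Local Notation FA := (FA R r).
Local Notation slmx := (slmx R r).
Local Notation xp := (xplus R i).
Local Notation xm := (xminus R i).

Lemma scalerAr' (c : C) (x y : FA) : x * (c *: y) = c *: (x * y).
Proof.
apply/malgP=> k; rewrite mcoeffZ.
rewrite (mcoeffMlw _ (fsubset_refl (msupp x)) (msuppZ_le c y)).
rewrite mcoeffMl mulr_sumr; apply: eq_bigr => k1 _.
rewrite mulr_sumr; apply: eq_bigr => k2 _.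
by rewrite mcoeffZ mulrCA mulrnAr.
Qed.

Lemma scalerAl' (c : C) (x y : FA) : c *: (x * y) = (c *: x) * y.
Proof. exact: scalerAl. Qed.

Lemma comm_tr0 (A B : 'M[C]_r.+1) : \tr (A *m B - B *m A) == 0.
Proof. by rewrite raddfB /= mxtrace_mulC subrr. Qed.

Definition H : slmx := exist (fun M : 'M[C]_r.+1 => \tr M == 0) _ (comm_tr0 (val xp) (val xm)).
Definition P2 : slmx := exist (fun M : 'M[C]_r.+1 => \tr M == 0) _ (comm_tr0 (val H) (val xm)).
Definition Z0 : slmx := exist (fun M : 'M[C]_r.+1 => \tr M == 0) _ (comm_tr0 (val xm) (val xm)).

Lemma valZ0 : val Z0 = 0.
Proof. by rewrite /= subrr. Qed.

Lemma ii_neq_m : idx i != ord_max.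
Proof. exact: idx_neq_max. Qed.

Lemma valH : val H = delta_mx (idx i) (idx i) - delta_mx ord_max ord_max.
Proof. by rewrite /= !mul_delta_mx. Qed.

Lemma valP2 : val P2 = (-2) *: val xm + val Z0.
Proof.
rewrite valZ0 addr0 /= !mul_delta_mx mulmxBl mulmxBr !mul_delta_mx.
rewrite !mul_delta_mx_0 ?max_neq_idx ?idx_neq_max //.
by rewrite sub0r subr0 scaleNr -opprD scaler_nat mulr2n.
Qed.

Lemma delta_low (x y a b : 'I_r.+1) :
  (x <= y)%N -> (b < a)%N -> ((a == x) && (b == y)) = false.
Proof.
move=> xy ba; apply/negP => /andP [/eqP ax /eqP bY]; subst.
by move: (leq_trans ba xy); rewrite ltnn.
Qed.

Lemma bplus_xp : in_bplus xp.
Proof.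
apply/forallP => a; apply/forallP => b; apply/implyP => ba.
rewrite /= mxE delta_low //=; exact: ltnW (ltn_ord i).
Qed.

Lemma bplus_H : in_bplus H.
Proof.
apply/forallP => a; apply/forallP => b; apply/implyP => ba.
by rewrite valH !mxE !delta_low //= subrr.
Qed.

Lemma nminus_xm : in_nminus xm.
Proof.
apply/forallP => a; apply/forallP => b; apply/implyP => ab.
rewrite /= mxE; apply/eqP; case: eqP => [am|] //=; case: eqP => [bi|] //= .
subst; move: ab; rewrite /= leqNgt => /negP; case.
by have := ltn_ord i.
Qed.

Lemma J0 : relJ (0 : FA).
Proof.
have h : val xp = 0 *: val xp + val xp by rewrite scale0r add0r.
have := J_scale 0 (@J_lin _ _ 0 xp xp xp 0 h).
by rewrite scale0r.
Qed.

Lemma JN (X : FA) : relJ X -> relJ (- X).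
Proof. by move=> h; rewrite -scaleN1r; apply: J_scale. Qed.
Arguments JN {X}.

Lemma JB (X Y : FA) : relJ X -> relJ Y -> relJ (X - Y).
Proof. by move=> hX hY; apply: J_add => //; apply: JN. Qed.

Lemma JZ0 k : relJ (ge Z0 k).
Proof.
have h : val Z0 = 1 *: val Z0 + val Z0 by rewrite valZ0 scaler0 addr0.
have := JN (@J_lin _ _ 1 Z0 Z0 Z0 k h).
by rewrite scale1r opprB addrK.
Qed.

Lemma J_xm_comm a b : relJ (ge xm a * ge xm b - ge xm b * ge xm a).
Proof.
have := J_add (@J_br _ _ xm xm Z0 a b erefl) (JZ0 (a + b)).
by rewrite subrK.
Qed.

Lemma J_xpxm a b :
  relJ (ge xp a * ge xm b - ge xm b * ge xp a - ge H (a + b)).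
Proof. by apply: J_br. Qed.

Lemma J_Hxm c b :
  relJ (ge H c * ge xm b - ge xm b * ge H c - (-2) *: ge xm (c + b)).
Proof.
have := J_add (J_add (@J_br _ _ H xm P2 c b erefl) (@J_lin _ _ (-2) xm Z0 P2 (c + b) valP2))
  (JZ0 (c + b)).
by rewrite genL4.
Qed.

Local Notation Lset := (@in_UgBplus R r).

Lemma LB_add (X Y : FA) : leftB X -> leftB Y -> leftB (X + Y).
Proof.
elim=> [|A M k X' hM hX IH] hY; first by rewrite add0r.
by rewrite -addrA; apply: LBgen => //; apply: IH.
Qed.

Lemma LB_scale (c : C) (X : FA) : leftB X -> leftB (c *: X).
Proof.
elim=> [|A M k X' hM hX IH]; first by rewrite scaler0; apply: LB0.
by rewrite scalerDr scalerAl; apply: LBgen.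
Qed.

Lemma LB_mull (B X : FA) : leftB X -> leftB (B * X).
Proof.
elim=> [|A M k X' hM hX IH]; first by rewrite mulr0; apply: LB0.
by rewrite mulrDr mulrA; apply: LBgen.
Qed.

Lemma L_J (X : FA) : relJ X -> Lset X.
Proof. by move=> h; exists X, 0; split=> //; split; [apply: LB0|rewrite addr0]. Qed.

Lemma L_add (X Y : FA) : Lset X -> Lset Y -> Lset (X + Y).
Proof.
move=> [Y1 [Z1 [h1 [h1' ->]]]] [Y2 [Z2 [h2 [h2' ->]]]].
exists (Y1 + Y2), (Z1 + Z2); split; first exact: J_add.
by split; [apply: LB_add|rewrite addrACA].
Qed.

Lemma L_scale (c : C) (X : FA) : Lset X -> Lset (c *: X).
Proof.
move=> [Y1 [Z1 [h1 [h1' ->]]]].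
exists (c *: Y1), (c *: Z1); split; first exact: J_scale.
by split; [apply: LB_scale|rewrite scalerDr].
Qed.

Lemma L_mull (B X : FA) : Lset X -> Lset (B * X).
Proof.
move=> [Y1 [Z1 [h1 [h1' ->]]]].
exists (B * Y1), (B * Z1); split; first exact: J_mull.
by split; [apply: LB_mull|rewrite mulrDr].
Qed.

Lemma L_gen (A : FA) (M : slmx) k : in_bplus M -> Lset (A * ge M k).
Proof.
move=> hM; exists 0, (A * ge M k + 0); split; first exact: J0.
by split; [apply: LBgen => //; apply: LB0|rewrite add0r addr0].
Qed.

Arguments L_add {X Y}.
Arguments L_J {X}.
Definition rep (X : FA) (k N m : nat) :=
  exists cs : seq (C * seq nat),
    (forall q, q \in cs -> (size q.2 + k = N)%N /\ sumn q.2 = m) /\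
    Lset (X - \sum_(q <- cs) q.1 *: bx xm q.2).

Lemma sumn_cons (a : nat) l : sumn (a :: l) = (a + sumn l)%N.
Proof. by []. Qed.

Lemma bx_cons (M : slmx) a s : bx M (a :: s) = ge M a * bx M s.
Proof. by rewrite /bx big_cons. Qed.

Lemma bx_nil (M : slmx) : bx M [::] = 1.
Proof. by rewrite /bx big_nil. Qed.

Lemma rep_L0 X k N m : Lset X -> rep X k N m.
Proof. by move=> h; exists [::]; split=> //; rewrite big_nil subr0. Qed.

Lemma rep_L X Y k N m : Lset (X - Y) -> rep Y k N m -> rep X k N m.
Proof.
move=> hXY [cs [Hcs HL]]; exists cs; split=> //.
by have := L_add hXY HL; rewrite addrA subrK.
Qed.

Lemma rep_add X1 X2 k N m : rep X1 k N m -> rep X2 k N m -> rep (X1 + X2) k N m.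
Proof.
move=> [cs1 [H1 L1]] [cs2 [H2 L2]]; exists (cs1 ++ cs2); split.
  by move=> q; rewrite mem_cat => /orP [/H1|/H2].
by rewrite big_cat opprD addrACA; apply: L_add.
Qed.

Lemma rep_scale (c : C) X k N m : rep X k N m -> rep (c *: X) k N m.
Proof.
move=> [cs [H1 L1]]; exists (map (fun q => (c * q.1, q.2)) cs); split.
  by move=> q /mapP [q' /H1 h ->].
rewrite big_map.
have -> : \sum_(q <- cs) (c * q.1) *: bx xm q.2 = c *: \sum_(q <- cs) q.1 *: bx xm q.2.
  by rewrite scaler_sumr; apply: eq_bigr => q _; rewrite scalerA.
by rewrite -scalerBr; apply: L_scale.
Qed.

Lemma rep_mulxm b X k N m : rep X k N m -> rep (ge xm b * X) k N.+1 (m + b).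
Proof.
move=> [cs [H1 L1]]; exists (map (fun q => (q.1, b :: q.2)) cs); split.
  move=> q /mapP [q' /H1 [h1 h2] ->] /=; split; [rewrite /= addSn h1 // | rewrite h2 addnC //].
rewrite big_map.
have -> : \sum_(q <- cs) q.1 *: bx xm (b :: q.2) =
          ge xm b * \sum_(q <- cs) q.1 *: bx xm q.2.
  by rewrite mulr_sumr; apply: eq_bigr => q _; rewrite bx_cons scalerAr'.
by rewrite -mulrBr; apply: L_mull.
Qed.

Lemma rep_shift j X k N m : rep X k N m -> rep X (k + j) (N + j) m.
Proof.
move=> [cs [H1 L1]]; exists cs; split=> // q /H1 [h1 h2]; split=> //; lia.
Qed.

Lemma rep_eq X k N m k' N' m' :
  k = k' -> N = N' -> m = m' -> rep X k N m -> rep X k' N' m'.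
Proof. by move=> -> -> ->. Qed.

Arguments rep_eq {X k N m k' N' m'}.
Arguments rep_mulxm b {X k N m}.
Arguments rep_shift j {X k N m}.
Arguments rep_scale c {X k N m}.

Lemma rep_bx q : rep (bx xm q) 0 (size q) (sumn q).
Proof.
exists [:: (1, q)]; split.
  by move=> q'; rewrite inE => /eqP -> /=; rewrite addn0.
by rewrite big_seq1 scale1r subrr; apply: L_J; apply: J0.
Qed.

Lemma repH s c : rep (ge H c * bx xm s) 0 (size s) (sumn s + c).
Proof.
elim: s c => [|b s IH] c.
  by apply: rep_L0; rewrite bx_nil mulr1 -[ge H c]mul1r; apply: L_gen; apply: bplus_H.
rewrite bx_cons.
apply: (@rep_L _ (ge xm b * (ge H c * bx xm s) + (-2) *: (ge xm (c + b) * bx xm s))).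
  apply: L_J.
  rewrite scalerAl' genL1.
  by apply: J_mulr; apply: J_Hxm.
apply: rep_add.
  by apply: (rep_eq _ _ _ (rep_mulxm b (IH c))) => //=; lia.
apply: rep_scale.
rewrite -bx_cons.
by apply: (rep_eq _ _ _ (rep_bx _)) => //=; lia.
Qed.

Lemma repXp s a : rep (ge xp a * bx xm s) 1 (size s) (sumn s + a).
Proof.
elim: s a => [|b s IH] a.
  by apply: rep_L0; rewrite bx_nil mulr1 -[ge xp a]mul1r; apply: L_gen; apply: bplus_xp.
rewrite bx_cons.
apply: (@rep_L _ (ge xm b * (ge xp a * bx xm s) + ge H (a + b) * bx xm s)).
  apply: L_J.
  rewrite genL1.
  by apply: J_mulr; apply: J_xpxm.
apply: rep_add.
  by apply: (rep_eq _ _ _ (rep_mulxm b (IH a))) => //=; lia.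
by apply: (rep_eq _ _ _ (rep_shift 1 (repH s (a + b)))) => //=; lia.
Qed.

Lemma repXpsum a (cs : seq (C * seq nat)) k N m :
  (forall q, q \in cs -> (size q.2 + k = N)%N /\ sumn q.2 = m) ->
  rep (ge xp a * \sum_(q <- cs) q.1 *: bx xm q.2) k.+1 N (m + a).
Proof.
elim: cs => [|q cs IH] Hcs.
  by apply: rep_L0; rewrite big_nil mulr0; apply: L_J; apply: J0.
rewrite big_cons mulrDr scalerAr'; apply: rep_add; last first.
  by apply: IH => q' hq'; apply: Hcs; rewrite inE hq' orbT.
have [h1 h2] := Hcs q (mem_head _ _).
apply: rep_scale.
apply: (rep_eq _ _ _ (rep_shift k (repXp q.2 a))); [by rewrite add1n | exact: h1 | by rewrite h2].
Qed.

Arguments repXpsum a {cs k N m}.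

Lemma repC sp s :
  rep (bx xp sp * bx xm s) (size sp) (size s) (sumn s + sumn sp).
Proof.
elim: sp => [|a sp [cs [Hcs HL]]].
  by rewrite bx_nil mul1r; apply: (rep_eq _ _ _ (rep_bx s)) => //=; lia.
rewrite bx_cons -mulrA.
apply: (@rep_L _ (ge xp a * \sum_(q <- cs) q.1 *: bx xm q.2)).
  by rewrite -mulrBr; apply: L_mull.
by apply: (rep_eq _ _ _ (repXpsum a Hcs)) => //=; lia.
Qed.

Lemma bx_cat (M : slmx) s t : bx M (s ++ t) = bx M s * bx M t.
Proof. by rewrite /bx big_cat. Qed.

Lemma xm_comm_bx a t : relJ (ge xm a * bx xm t - bx xm t * ge xm a).
Proof.
elim: t => [|b t IH]; first by rewrite bx_nil genL0; apply: J0.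
rewrite bx_cons.
rewrite genL2.
by apply: J_add; [apply: J_mulr; apply: J_xm_comm|apply: J_mull].
Qed.

Lemma bx_perm s t : perm_eq s t -> relJ (bx xm s - bx xm t).
Proof.
elim: s t => [|x s IH] t.
  by rewrite perm_sym => /perm_nilP ->; rewrite subrr; apply: J0.
move=> hp.
have hx : x \in t by rewrite -(perm_mem hp) mem_head.
move: hp; case/splitPr: hx => t1 t2 hp.
have e : perm_eq (t1 ++ x :: t2) (x :: (t1 ++ t2)).
  by rewrite -cat1s perm_catCA ?perm_refl.
have := perm_trans hp e; rewrite perm_cons => {}hp.
rewrite bx_cons bx_cat bx_cons.
rewrite genL3 -bx_cat.
by apply: J_add; [apply: J_mull; apply: IH|apply: J_mulr; apply: xm_comm_bx].
Qed.

Lemma span_sum (cs : seq (C * seq nat)) :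
  nminus_span (\sum_(q <- cs) q.1 *: bx xm q.2).
Proof.
elim: cs => [|q cs IH]; first by rewrite big_nil; apply: NS0.
rewrite big_cons.
have -> : bx xm q.2 = \prod_(g <- map (fun a => (xm, a)) q.2) ge g.1 g.2.
  by rewrite big_map.
apply: NSw => //.
by apply/allP => g /mapP [a _ ->]; apply: nminus_xm.
Qed.

Lemma sort_J (cs : seq (C * seq nat)) :
  relJ (\sum_(q <- cs) q.1 *: bx xm q.2 -
        \sum_(q <- cs) q.1 *: bx xm (sort leq q.2)).
Proof.
rewrite -sumrB; apply: big_ind; [exact: J0 | exact: J_add | move=> q _].
rewrite -scalerBr; apply: J_scale; apply: bx_perm.
by rewrite perm_sym perm_sort.
Qed.

End Proof.

Theorem proposition3p1 (R : realType) (r : nat) (i : 'I_r)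
    (sp s : seq nat) :
  inFplus sp -> inF s ->
  exists cs : seq (complex R * seq nat),
    (forall q, q \in cs ->
       [/\ inF q.2, (size q.2 + size sp)%N = size s
         & sumn q.2 = (sumn s + sumn sp)%N]) /\
    is_pr (bx (xplus R i) sp * bx (xminus R i) s)
          (\sum_(q <- cs) q.1 *: bx (xminus R i) q.2).
Proof.
move=> _ _.
have [cs [Hcs HL]] := @repC R r i sp s.
exists (map (fun q => (q.1, sort leq q.2)) cs); split.
  move=> q /mapP [q' /Hcs [h1 h2] ->] /=; split.
  - exact: (sort_sorted leq_total).
  - by rewrite size_sort.
  - by rewrite (perm_sumn (permEl (perm_sort leq _))) h2.
split.
  exists 0, (\sum_(q <- map (fun q => (q.1, sort leq q.2)) cs) q.1 *: bx (xminus R i) q.2).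
  split; first exact: J0.
  by split; [apply: span_sum|rewrite add0r].
rewrite big_map /=.
have := @L_add R r _ _ HL (@L_J R r _ (@sort_J R r i cs)).
by rewrite genT.
Qed.
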